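(* For every $u\in K$, $$\overline V=W:=\{v\in X:\ (Bv)(x)\ge0 \text{ for all } x\in\omega_c\},$$ where the closure of $V$ is taken in $X$.
   Context: Fix $T>1$. $X=H^1_0(0,T)$, $U=\{1+v:v\in X\}$, $(Bw)(x)=\int_x^{x+1}w$ for $x\in[0,T-1]$, $K=\{u\in U: Bu\ge0 \text{ on }[0,T-1]\}$, $\omega_c=\{x\in[0,T-1]:(Bu)(x)=0\}$. For fixed $u$, $V=\{v\in X:\ \exists(\varepsilon_n)\subset(0,\infty),\ \varepsilon_n\to0,\ B(u+\varepsilon_nv)\ge0 \text{ on }[0,T-1]\ \forall n\}$. *)

(* Defs.v *)
From HB Require Import structures.
From mathcomp Require Import all_boot all_order all_algebra.
From mathcomp Require Import all_classical all_reals all_analysis.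
Set Implicit Arguments. Unset Strict Implicit. Unset Printing Implicit Defensive.
Import Order.TTheory GRing.Theory Num.Theory.
Import numFieldNormedType.Exports.
Local Open Scope classical_set_scope.
Local Open Scope ring_scope.

Section Defs.
Variable R : realType.
Local Notation mu := (@lebesgue_measure R).

Definition cc (a b : R) : set R := [set x | a <= x <= b].

(* g is an L^2(0,T) weak derivative of v on [0,T]:
   g measurable and square-integrable on [0,T], and v(x) = v(0) + int_0^x g. *)
Definition is_wderiv (T : R) (v g : R -> R) : Prop :=
  measurable_fun (cc 0 T) g /\
  (\int[mu]_(t in (cc 0 T)) ((g t) ^+ 2)%:E < +oo)%E /\
  (forall x, 0 <= x <= T -> v x = v 0 + Rintegral mu (cc 0 x) g).

(* X = H^1_0(0,T): functions on [0,T] with an L^2 weak derivative,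
   vanishing at 0 and T (absolutely continuous representative). *)
Definition H10 (T : R) (v : R -> R) : Prop :=
  (exists g, is_wderiv T v g) /\ v 0 = 0 /\ v T = 0.

Definition Bop (w : R -> R) (x : R) : R := Rintegral mu (cc x (x + 1)) w.

Definition shift1 (v : R -> R) : R -> R := fun x => 1 + v x.

(* K: u = 1 + v0 with v0 in X and B u >= 0 on [0, T-1] *)
Definition inK (T : R) (v0 : R -> R) : Prop :=
  H10 T v0 /\ forall x, 0 <= x <= T - 1 -> 0 <= Bop (shift1 v0) x.

Definition omega_c (T : R) (u : R -> R) : set R :=
  [set x | 0 <= x <= T - 1 /\ Bop u x = 0].

Definition Vset (T : R) (u : R -> R) : set (R -> R) :=
  [set v | H10 T v /\ exists eps : nat -> R,
      (forall n, 0 < eps n) /\ eps @ \oo --> (0 : R) /\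
      forall n x, 0 <= x <= T - 1 ->
        0 <= Bop (fun y => u y + eps n * v y) x].

Definition Wset (T : R) (u : R -> R) : set (R -> R) :=
  [set v | H10 T v /\ forall x, omega_c T u x -> 0 <= Bop v x].

(* closure in X w.r.t. the H^1(0,T) norm
   ||z||^2 = int_0^T z^2 + int_0^T (z')^2 *)
Definition H1closure (T : R) (A : set (R -> R)) : set (R -> R) :=
  [set v | H10 T v /\ forall e : R, 0 < e ->
     exists w, A w /\ exists g, is_wderiv T (fun x => v x - w x) g /\
       (\int[mu]_(t in (cc 0 T)) ((v t - w t) ^+ 2)%:E
        + \int[mu]_(t in (cc 0 T)) ((g t) ^+ 2)%:E < (e ^+ 2)%:E)%E].

End Defs.

(* Main.v *)
Require Import Defs.
From HB Require Import structures.
From mathcomp Require Import all_boot all_order all_algebra.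
From mathcomp Require Import all_classical all_reals all_analysis.
From mathcomp Require Import ring lra.
Import Order.TTheory GRing.Theory Num.Theory.
Import numFieldNormedType.Exports.
Local Open Scope classical_set_scope.
Local Open Scope ring_scope.

Section Aux.
Variable R : realType.
Local Notation mu := (@lebesgue_measure R).

Lemma ccE (a b : R) : cc a b = `[a, b]%classic.
Proof. by apply/seteqP; split => x /=; rewrite in_itv. Qed.

Lemma cc_meas (a b : R) : measurable (cc a b).
Proof. by rewrite ccE. Qed.

Lemma ccS (a b c d : R) : a <= c -> d <= b -> cc c d `<=` cc a b.
Proof. move=> ac db x /= /andP[h1 h2]; apply/andP; split; lra. Qed.

Lemma wcD (A : set R) (f g : R -> R) :
  {within A, continuous f} -> {within A, continuous g} ->
  {within A, continuous (fun x => f x + g x)}.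
Proof. by move=> cf cg x; apply: cvgD; [exact: cf|exact: cg]. Qed.

Lemma wcM (A : set R) (f g : R -> R) :
  {within A, continuous f} -> {within A, continuous g} ->
  {within A, continuous (fun x => f x * g x)}.
Proof. by move=> cf cg x; apply: cvgM; [exact: cf|exact: cg]. Qed.

Lemma wcC (A : set R) (c : R) : {within A, continuous (fun _ : R => c)}.
Proof. by apply: continuous_subspaceT => x; exact: cvg_cst. Qed.

Lemma wc_int (a b : R) (f : R -> R) : {within `[a, b], continuous f} ->
  mu.-integrable `[a, b] (EFin \o f).
Proof. by move=> cf; apply: continuous_compact_integrable => //; exact: segment_compact. Qed.

Lemma wc_intc (a b c d : R) (f : R -> R) : {within `[a, b], continuous f} ->
  a <= c -> d <= b -> mu.-integrable (cc c d) (EFin \o f).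
Proof.
move=> cf ac db; apply: (@integrableS _ _ _ mu `[a, b]%classic) => //.
- exact: cc_meas.
- by rewrite -ccE; exact: ccS.
- exact: wc_int.
Qed.


Definition sqint (D : set R) (g : R -> R) : Prop :=
  measurable_fun D g /\ (\int[mu]_(t in D) ((g t) ^+ 2)%:E < +oo)%E.

Lemma sqintP (D : set R) (g : R -> R) : measurable D ->
  sqint D g <-> (measurable_fun D g /\ mu.-integrable D (EFin \o (fun t => g t ^+ 2))).
Proof.
move=> mD; split => [[mg fin]|[mg /integrableP [_ fin]]]; split => //.
- apply/integrableP; split; first by apply/measurable_realfun.measurable_EFinP; exact: measurable_realfun.measurable_funX.
  by under eq_integral do rewrite /= ger0_norm ?sqr_ge0//.
- by move: fin; under eq_integral do rewrite /= ger0_norm ?sqr_ge0//.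
Qed.

Lemma int_cst (D : set R) (r : R) : measurable D -> (mu D < +oo)%E ->
  mu.-integrable D (EFin \o cst r).
Proof.
move=> mD Dfin; apply/integrableP; split; first exact/measurable_realfun.measurable_EFinP.
rewrite (_ : (fun x => _) = cst `|r|%:E); last by apply/funext.
by rewrite integral_cst// lte_mul_pinfty.
Qed.

Lemma sqint_int (D : set R) (g : R -> R) : measurable D -> (mu D < +oo)%E ->
  sqint D g -> mu.-integrable D (EFin \o g).
Proof.
move=> mD Dfin /(sqintP D g mD) [mg ig2].
apply: (@le_integrable _ _ _ mu D mD _ (EFin \o (fun t => 1 + g t ^+ 2))) => //.
- exact/measurable_realfun.measurable_EFinP.
- move=> x _ /=; rewrite lee_fin; have h1 : (0 : R) <= 1 + g x ^+ 2 by rewrite addr_ge0 ?sqr_ge0.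
  rewrite (ger0_norm h1) ler_norml; apply/andP; split; nra.
- apply: (@eq_integrable _ _ _ mu D mD (EFin \o cst 1 \+ (EFin \o (fun t => g t ^+ 2)))) => //.
  apply: integrableD => //.
  exact: int_cst.
Qed.

Lemma sqint_lin (D : set R) (f h : R -> R) (a b : R) : measurable D ->
  sqint D f -> sqint D h -> sqint D (fun t => a * f t + b * h t).
Proof.
move=> mD /(sqintP D f mD) [mf if2] /(sqintP D h mD) [mh ih2].
have mfh : measurable_fun D (fun t => a * f t + b * h t).
  apply: measurable_realfun.measurable_funD; apply: measurable_realfun.measurable_funM => //; exact: measurable_cst.
apply/(sqintP _ _ mD); split => //.
apply: (@le_integrable _ _ _ mu D mD _
   (EFin \o (fun t => 2 * a ^+ 2 * f t ^+ 2 + 2 * b ^+ 2 * h t ^+ 2))) => //.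
- apply/measurable_realfun.measurable_EFinP; exact: measurable_realfun.measurable_funX.
- move=> x _ /=; rewrite lee_fin.
  have h1 : (0 : R) <= (a * f x + b * h x) ^+ 2 by rewrite sqr_ge0.
  have h2 : (0 : R) <= 2 * a ^+ 2 * f x ^+ 2 + 2 * b ^+ 2 * h x ^+ 2.
    by have := sqr_ge0 a; have := sqr_ge0 b; have := sqr_ge0 (f x); have := sqr_ge0 (h x); nra.
  rewrite (ger0_norm h1) (ger0_norm h2).
  have := sqr_ge0 (a * f x - b * h x); nra.
- have := integrableD (mu:=mu) mD (integrableZl (mu:=mu) mD (2 * a ^+ 2) if2) (integrableZl (mu:=mu) mD (2 * b ^+ 2) ih2).
  apply: eq_integrable => // x _ /=; by rewrite -!EFinM -EFinD !mulrA.
Qed.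


Lemma intZ (D : set R) (f : R -> R) (k : R) : measurable D ->
  mu.-integrable D (EFin \o f) -> mu.-integrable D (EFin \o (fun t => k * f t)).
Proof.
move=> mD intf; have := integrableZl (mu:=mu) mD k intf.
by apply: eq_integrable => // x _ /=; rewrite EFinM.
Qed.

Lemma intD (D : set R) (f h : R -> R) : measurable D ->
  mu.-integrable D (EFin \o f) -> mu.-integrable D (EFin \o h) ->
  mu.-integrable D (EFin \o (fun t => f t + h t)).
Proof.
move=> mD intf inth; have := integrableD (mu:=mu) mD intf inth.
by apply: eq_integrable => // x _ /=; rewrite EFinD.
Qed.

Lemma mu_cc (a b : R) : a <= b -> mu (cc a b) = (b - a)%:E.
Proof. by move=> ab; rewrite ccE lebesgue_measure_itv/= lte_fin; case: ltgtP ab => //= ->; rewrite subrr. Qed.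

Lemma mu_cc_fin (a b : R) : (mu (cc a b) < +oo)%E.
Proof.
case: (lerP a b) => ab; first by rewrite mu_cc // ltry.
rewrite (_ : cc a b = set0) ?measure0 //.
by apply/seteqP; split => x //= /andP [h1 h2]; lra.
Qed.

Lemma wderiv_int (T : R) z g : is_wderiv T z g -> mu.-integrable (cc 0 T) (EFin \o g).
Proof.
move=> [mg [fin _]]; apply: sqint_int => //; first exact: cc_meas.
exact: mu_cc_fin.
Qed.

Lemma wderiv_cont (T : R) z g : 0 <= T -> is_wderiv T z g ->
  {within `[0, T], continuous z}.
Proof.
move=> hT hw; have ig := wderiv_int _ _ _ hw; rewrite ccE in ig.
have hc := parameterized_integral_continuous hT ig.
have hc2 := @wcD _ _ _ (wcC `[0, T]%classic (z 0)) hc.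
apply: (subspace_eq_continuous _ hc2) => x; rewrite inE /= in_itv /= => hx.
by case: hw => _ [_ hz]; rewrite /from_subspace /= (hz x hx) /parameterized_integral ccE.
Qed.

Lemma wderiv_lin (T : R) f gf h gh a b : 0 <= T -> is_wderiv T f gf -> is_wderiv T h gh ->
  is_wderiv T (fun x => a * f x + b * h x) (fun t => a * gf t + b * gh t).
Proof.
move=> hT hf hh.
have igf := wderiv_int _ _ _ hf; have igh := wderiv_int _ _ _ hh.
case: hf => mgf [fgf ef]; case: hh => mgh [fgh eh].
have [m2 f2] := sqint_lin _ _ _ a b (cc_meas 0 T) (conj mgf fgf) (conj mgh fgh).
split => //; split => // x hx.
have sub : cc 0 x `<=` cc 0 T by apply: ccS => //; case/andP: hx.
have mx := cc_meas 0 x.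
have igf' := @integrableS _ _ _ mu _ _ _ (cc_meas 0 T) mx sub igf.
have igh' := @integrableS _ _ _ mu _ _ _ (cc_meas 0 T) mx sub igh.
rewrite RintegralD //; try exact: intZ.
rewrite RintegralZl // RintegralZl // ef // eh //; lra.
Qed.


Lemma Bop_lin (T : R) (f h : R -> R) (a b x : R) : 0 <= x <= T - 1 ->
  {within `[0, T], continuous f} -> {within `[0, T], continuous h} ->
  Bop (fun y => a * f y + b * h y) x = a * Bop f x + b * Bop h x.
Proof.
move=> /andP [x0 xT] cf ch; rewrite /Bop.
have xT' : x + 1 <= T by lra.
have if1 := wc_intc _ _ _ _ _ cf x0 xT'.
have ih1 := wc_intc _ _ _ _ _ ch x0 xT'.
have mD := cc_meas x (x + 1).
rewrite RintegralD //; try (apply: intZ => //).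
by rewrite RintegralZl // RintegralZl.
Qed.

Lemma Bop_cst (c x : R) : Bop (fun _ => c) x = c.
Proof.
have h1 : mu (cc x (x + 1)) = 1%:E.
  by rewrite mu_cc; [rewrite addrC addKr | rewrite lerDl].
rewrite /Bop Rintegral_cst; last exact: cc_meas.
have -> : fine (mu (cc x (x + 1))) = 1 by rewrite h1.
by rewrite mulr1.
Qed.


Lemma Bop_cont (T : R) (f : R -> R) : 1 <= T -> {within `[0, T], continuous f} ->
  {within `[0, T - 1], continuous (Bop f)}.
Proof.
move=> hT cf.
pose ft := f \_ `[0, T].
have ift : mu.-integrable `[-1, T + 1] (EFin \o ft).
  have h0 : mu.-integrable setT ((EFin \o f) \_ `[0, T]).
    by apply/(@integrable_mkcond _ _ _ mu _ (EFin \o f) (measurable_itv `[0, T])).1; exact: wc_int.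
  rewrite restrict_EFin in h0.
  apply: (@integrableS _ _ _ mu setT) => //; exact: h0.
have T1 : -1 < T + 1 by lra.
have cG := parameterized_integral_continuous (ltW T1) ift.
pose G := fun y => parameterized_integral mu (-1) y ft.
have cGy : forall y, -1 < y < T + 1 -> {for y, continuous G}.
  by move=> y hy; apply: (within_continuous_continuous T1 cG); rewrite in_itv.
pose H := fun y => G (y + 1) - G y.
have cH : {within `[0, T - 1], continuous H}.
  apply: continuous_in_subspaceT => y; rewrite inE /= in_itv /= => /andP [y0 yT].
  have c1 : {for y, continuous (G \o (fun z => z + 1))}.
    apply: continuous_comp.
      by apply: cvgD; [exact: cvg_id | exact: cvg_cst].
    by apply: cGy; apply/andP; split; lra.
  have c2 : {for y, continuous G} by apply: cGy; apply/andP; split; lra.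
  exact: (cvgB c1 c2).
apply: (subspace_eq_continuous _ cH) => y; rewrite inE /= in_itv /= => /andP [y0 yT].
rewrite /from_subspace /H /G /parameterized_integral /=.
have i1 : mu.-integrable `[-1, y + 1] (EFin \o ft).
  apply: (@integrableS _ _ _ mu `[-1, T + 1]%classic) => //.
  by apply: subset_itvl; rewrite bnd_simp; lra.
rewrite Rintegral_itvB //; last 2 first.
- by rewrite bnd_simp; lra.
- by rewrite bnd_simp; lra.
rewrite Rintegral_itv_obnd_cbnd; last first.
  apply: (@integrableS _ _ _ mu `[-1, y + 1]%classic) => //.
  by apply: subset_itvr; rewrite bnd_simp; lra.
rewrite /Bop ccE; apply: eq_Rintegral => t; rewrite inE /= in_itv /= => /andP [t1 t2].
by rewrite /ft patchE ifT // inE /= in_itv /=; apply/andP; split; lra.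
Qed.


Lemma Bop_lower (T : R) (z g : R -> R) (x e : R) : 1 <= T -> 0 <= x <= T - 1 -> 0 < e ->
  is_wderiv T z g ->
  (\int[mu]_(t in cc 0 T) ((z t) ^+ 2)%:E + \int[mu]_(t in cc 0 T) ((g t) ^+ 2)%:E
     < (e ^+ 2)%:E)%E ->
  - e <= Bop z x.
Proof.
move=> hT hx e0 hw hI.
have T0 : 0 <= T by lra.
have cz := wderiv_cont T z g T0 hw.
have czz := wcM _ _ _ cz cz.
have [x0 xT] := andP hx.
have xT' : x + 1 <= T by lra.
have c1 := wcC `[0, T]%classic 1.
set a := - (e / 2); set b := - (1 / (2 * e)).
have cq : {within `[0, T], continuous (fun y => a * (fun _ : R => 1) y + b * (z y * z y))}.
  apply: wcD; apply: wcM => //; exact: wcC.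
have step1 : Bop (fun y => a * (fun _ : R => 1) y + b * (z y * z y)) x <= Bop z x.
  apply: le_Rintegral; first exact: cc_meas.
  - exact: (wc_intc _ _ _ _ _ cq).
  - exact: (wc_intc _ _ _ _ _ cz).
  move=> y _ /=.
  have e2 : 2 * e != 0 by rewrite mulf_neq0 // gt_eqF.
  have key : a * 1 + b * (z y * z y) = z y - (z y + e) ^+ 2 / (2 * e).
    by rewrite /a /b; field; rewrite gt_eqF.
  rewrite key; have := divr_ge0 (sqr_ge0 (z y + e)) (_ : 0 <= 2 * e).
  by move=> /(_ ltac:(lra)); lra.
rewrite (Bop_lin T (fun _ => 1) (fun y => z y * z y) a b x hx c1 czz) Bop_cst in step1.
set t := Bop (fun y => z y * z y) x in step1.
have izz := wc_int _ _ _ czz; rewrite -ccE in izz.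
have fin1 := @integrable_fin_num _ _ _ mu _ (cc_meas 0 T) _ izz.
have izx := wc_intc _ _ _ _ _ czz x0 xT'.
have fin2 := @integrable_fin_num _ _ _ mu _ (cc_meas x (x + 1)) _ izx.
have step2 : t <= fine (\int[mu]_(t in cc 0 T) (z t * z t)%:E).
  rewrite /t /Bop /Rintegral; apply: fine_le => //.
  apply: ge0_subset_integral; first exact: cc_meas; first exact: cc_meas.
  - exact: (measurable_int mu izz).
  - by move=> y _; rewrite lee_fin -expr2 sqr_ge0.
  - exact: ccS.
have step3 : fine (\int[mu]_(t in cc 0 T) (z t * z t)%:E) < e ^+ 2.
  rewrite -lte_fin fineK //.
  apply: le_lt_trans hI.
  under eq_integral do rewrite -expr2.
  by apply: leeDl; apply: integral_ge0 => y _; rewrite lee_fin sqr_ge0.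
have hb : (1 / (2 * e)) * t <= (1 / (2 * e)) * e ^+ 2.
  apply: ler_wpM2l; first by rewrite divr_ge0 //; lra.
  exact: (le_trans step2 (ltW step3)).
have he : (1 / (2 * e)) * e ^+ 2 = e / 2 by field; rewrite gt_eqF.
rewrite /a /b in step1; lra.
Qed.

End Aux.

Local Notation mu := (@lebesgue_measure _).
Arguments cc_meas {R}.
Arguments sqintP {R}.
Arguments wderiv_cont {R T z g}.
Arguments wderiv_lin {R T f gf h gh}.
Arguments wderiv_int {R T z g}.
Arguments Bop_lin {R T f h}.
Arguments Bop_cont {R T f}.
Arguments Bop_lower {R T z g x e}.
Arguments wcD {R A f g}.
Arguments wcM {R A f g}.
Arguments wc_int {R a b f}.
Arguments wc_intc {R a b c d f}.

Theorem mainTheorem6 (R : realType) (T : R) (hT : 1 < T) (v0 : R -> R)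
  (hK : inK T v0) :
  H1closure T (Vset T (shift1 v0)) = Wset T (shift1 v0).
Proof.
have T0 : 0 <= T by lra.
have T1 : 1 <= T by lra.
case: hK => [[[g0 hg0] [v00 v0T]] hKB].
have cv0 := wderiv_cont T0 hg0.
have cu : {within `[0, T], continuous (shift1 v0)}.
  by rewrite /shift1; apply: wcD => //; exact: wcC.
have Bu_lin : forall (w : R -> R) (ep x : R), {within `[0, T], continuous w} ->
    0 <= x <= T - 1 ->
    Bop (fun y => shift1 v0 y + ep * w y) x = Bop (shift1 v0) x + ep * Bop w x.
  move=> w ep x cw hx.
  rewrite (_ : (fun y => _) = (fun y => 1 * shift1 v0 y + ep * w y)); last first.
    by apply/funext => y; rewrite mul1r.
  by rewrite (Bop_lin 1 ep x hx cu cw) mul1r.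
apply/seteqP; split.
- move=> v [hv hcl]; split => // x [hx hBu0].
  have [[g hg] _] := hv.
  have cv := wderiv_cont T0 hg.
  apply/ler_addgt0Pr => e e0.
  have [w [[hw [eps [eps0 [_ epsB]]]] [g' [hwd hint]]]] := hcl e e0.
  have [[gw hgw] _] := hw.
  have cw := wderiv_cont T0 hgw.
  have Bw0 : 0 <= Bop w x.
    by have := epsB 0%N x hx; rewrite Bu_lin // hBu0 add0r pmulr_rge0.
  have Bz := Bop_lower T1 hx e0 hwd hint.
  have : Bop (fun y => v y - w y) x = Bop v x - Bop w x.
    rewrite (_ : (fun y => v y - w y) = (fun y => 1 * v y + (-1) * w y)); last first.
      by apply/funext => y; rewrite mul1r mulN1r.
    by rewrite (Bop_lin 1 (-1) x hx cv cw) mul1r mulN1r.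
  lra.
- move=> v [hv hW]; split => // e e0.
  have [[g hg] [v_0 v_T]] := hv.
  have cv := wderiv_cont T0 hg.
  set A := fine (\int[mu]_(t in cc 0 T) ((v0 t) ^+ 2)%:E).
  set C := fine (\int[mu]_(t in cc 0 T) ((g0 t) ^+ 2)%:E).
  have A0 : 0 <= A by apply: fine_ge0; apply: integral_ge0 => y _; rewrite lee_fin sqr_ge0.
  have C0 : 0 <= C by apply: fine_ge0; apply: integral_ge0 => y _; rewrite lee_fin sqr_ge0.
  pose S := A + C.
  pose d := e / (S + 1).
  have S1 : 0 < S + 1 by rewrite /S; lra.
  have d0 : 0 < d by rewrite /d divr_gt0.
  have hdS : d * (S + 1) = e by rewrite /d; field; rewrite gt_eqF.
  pose w := fun y => 1 * v y + (- d) * v0 y.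
  have hwd : is_wderiv T w (fun t => 1 * g t + (- d) * g0 t) := wderiv_lin 1 (- d) T0 hg hg0.
  have cw := wderiv_cont T0 hwd.
  exists w; split.
  + split.
      split; first by exists (fun t => 1 * g t + (- d) * g0 t).
      by rewrite /w v_0 v00 v_T v0T; split; ring.
    have T10 : 0 <= T - 1 by lra.
    have cBv := Bop_cont T1 cv.
    have cBu := Bop_cont T1 cu.
    have cBv0 := Bop_cont T1 cv0.
    have [c1 hc1 hm] := EVT_min T10 cBv.
    set m := Bop v c1 in hm.
    pose hf := fun x => Bop (shift1 v0) x + ((fun _ => 0) \max (fun y => Bop v y + d)) x.
    have chf : {within `[0, T - 1], continuous hf}.
      apply: wcD => // t; apply: continuous_max.
        exact: (wcC _ _ 0 t).
      exact: (wcD cBv (wcC _ _ d) t).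
    have [c2 hc2 hmin] := EVT_min T10 chf.
    set c := hf c2 in hmin.
    have c0 : 0 < c.
      move: hc2; rewrite in_itv /= => hx2.
      have hu0 := hKB c2 hx2.
      rewrite /c /hf /=.
      case: (ltrP 0 (Bop (shift1 v0) c2)) => hb.
        apply: (lt_le_trans hb); rewrite lerDl le_max lexx //.
      have hb0 : Bop (shift1 v0) c2 = 0 by apply/eqP; rewrite eq_le hb hu0.
      have := hW c2 (conj hx2 hb0).
      rewrite hb0 add0r => hv2.
      apply: (lt_le_trans _ (_ : Bop v c2 + d <= _)); first lra.
      by rewrite le_max lexx orbT.
    pose K := `|m| + 1.
    have K0 : 0 < K by rewrite /K; have := normr_ge0 m; lra.
    have mK : - K <= m by rewrite /K; have := ler_norm (- m); rewrite normrN; lra.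
    pose P := 2 * d * c + 2 * K.
    have P0 : 0 < P by rewrite /P; have := mulr_gt0 d0 c0; lra.
    pose ep0 := c / P.
    have ep00 : 0 < ep0 by rewrite /ep0 divr_gt0.
    have hep : ep0 * P = c by rewrite /ep0; field; rewrite gt_eqF.
    have edc : 0 < ep0 * d * c := mulr_gt0 (mulr_gt0 ep00 d0) c0.
    have eK : 0 < ep0 * K := mulr_gt0 ep00 K0.
    have hed : ep0 * d <= 1 / 2.
      have : ep0 * d * c * 2 + ep0 * K * 2 = c by rewrite -[in RHS]hep /P; ring.
      move=> h; rewrite -subr_ge0.
      have : 0 <= (1 / 2 - ep0 * d) * c by nra.
      by rewrite pmulr_lge0.
    have heK : ep0 * K <= c / 2.
      have : ep0 * d * c * 2 + ep0 * K * 2 = c by rewrite -[in RHS]hep /P; ring.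
      lra.
    exists (fun n => ep0 * harmonic n); split; [|split].
    * by move=> n; rewrite mulr_gt0 // harmonic_gt0.
    * have := cvgM (cvg_cst ep0) (@cvg_harmonic R); rewrite mulr0; exact.
    * move=> n x hx.
      have hx' : x \in `[0, T - 1] by rewrite in_itv.
      set ep := ep0 * harmonic n.
      have ep_0 : 0 < ep by rewrite /ep mulr_gt0 // harmonic_gt0.
      have epl : ep <= ep0.
        rewrite /ep ger_pMr // /harmonic /= invf_le1 ?ler1n //.
      rewrite Bu_lin //.
      have -> : Bop w x = 1 * Bop v x + (- d) * Bop v0 x by exact: (Bop_lin 1 (- d) x hx cv cv0).
      have -> : Bop v0 x = Bop (shift1 v0) x - 1.
        have E := Bop_lin 1 1 x hx (wcC _ `[0, T]%classic 1) cv0.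
        have E2 : (fun y => 1 * (fun _ : R => 1) y + 1 * v0 y) = shift1 v0.
          by apply/funext => y; rewrite /shift1 !mul1r.
        rewrite E2 Bop_cst !mul1r in E.
        rewrite E; ring.
      have ha := hKB x hx.
      set a := Bop (shift1 v0) x in ha *.
      set b := Bop v x.
      have hb := hm x hx'; rewrite -/b in hb.
      have hmx := hmin x hx'; rewrite /hf /= -/a -/b in hmx.
      have -> : a + ep * (1 * b + - d * (a - 1)) = a * (1 - ep * d) + ep * (b + d) by ring.
      have epd : ep * d <= 1 / 2.
        by apply: le_trans hed; rewrite ler_pM2r.
      case: (lerP 0 (b + d)) => hbd.
        apply: addr_ge0; apply: mulr_ge0 => //; lra.
      move: hmx; rewrite (max_idPl (ltW hbd)) addr0 => hca.
      have p1 : c / 2 <= a * (1 - ep * d) by nra.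
      have p2 : ep * (- K) <= ep * b by rewrite ler_pM2l //; lra.
      have p3 : ep * K <= ep0 * K by rewrite ler_pM2r.
      have p4 : ep * b <= ep * (b + d) by rewrite ler_pM2l //; lra.
      nra.
  + exists (fun t => 0 * g t + d * g0 t).
    have -> : (fun x => v x - w x) = (fun x => 0 * v x + d * v0 x).
      by apply/funext => y; rewrite /w; ring.
    split; first exact: wderiv_lin.
    have iv0 : mu.-integrable (cc 0 T) (EFin \o (fun t => v0 t ^+ 2)).
      rewrite ccE; apply: wc_int.
      rewrite (_ : (fun t => v0 t ^+ 2) = (fun t => v0 t * v0 t)); last first.
        by apply/funext => t; rewrite expr2.
      exact: wcM.
    have ig0 : mu.-integrable (cc 0 T) (EFin \o (fun t => g0 t ^+ 2)).
      have [m1 [f1 _]] := hg0.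
      exact (proj2 ((sqintP (cc 0 T) g0 (cc_meas 0 T)).1 (conj m1 f1))).
    have fa := @integrable_fin_num _ _ _ mu _ (cc_meas 0 T) _ iv0.
    have fc := @integrable_fin_num _ _ _ mu _ (cc_meas 0 T) _ ig0.
    have ew : forall t, v t - w t = d * v0 t by move=> t; rewrite /w; ring.
    under eq_integral => t _ do rewrite ew exprMn EFinM.
    under [X in (_ + X)%E]eq_integral => t _ do rewrite mul0r add0r exprMn EFinM.
    rewrite integralZl //; last exact: cc_meas.
    rewrite integralZl //; last exact: cc_meas.
    rewrite -(fineK fa) -(fineK fc) -!EFinM -EFinD lte_fin.
    have -> : fine (\int[mu]_(x in cc 0 T) (EFin \o (fun t => (v0 t ^+ 2)%R)) x) = A by [].
    have -> : fine (\int[mu]_(x in cc 0 T) (EFin \o (fun t => (g0 t ^+ 2)%R)) x) = C by [].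
    have dd : 0 < d ^+ 2 by rewrite exprn_gt0.
    rewrite -hdS [X in _ < X]exprMn -mulrDr -/S ltr_pM2l //.
    have S0 : 0 <= S by rewrite /S; lra.
    nra.
Qed.
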